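(* Let $f_1,\dots,f_n:\mathbb{R}^d\to\mathbb{R}$ be such that each $f_i$ is $L_i$-smooth and $\mu_i$-strongly convex with minimizer $x_i$. Let $\alpha_i\in(0,1)$, $T_i(x) = \alpha_i x+(1-\alpha_i)x_i$, $\tilde f(x) = \frac{1}{n}\sum_i f_i(T_i(x))$ with minimizer $x^*$, $L_\alpha = \frac{1}{n}\sum_i\alpha_i^2L_i$, $\mu_\alpha = \frac{1}{n}\sum_i\alpha_i^2\mu_i$. Let $\omega_i\geq0$ and $\beta_i\in(0,\frac{1}{\omega_i+1}]$. Consider DIANA applied to $\tilde f$: given $x^0, h_1^0,\dots,h_n^0\in\mathbb{R}^d$, for $k\geq0$ set $\Delta_i^k = \alpha_i\nabla f_i(T_i(x^k)) - h_i^k$, $\hat\Delta_i^k = \mathcal{C}_i^k(\Delta_i^k)$, $h_i^{k+1} = h_i^k + \beta_i\hat\Delta_i^k$, $g^k = \frac{1}{n}\sum_i(h_i^k + \hat\Delta_i^k)$, $x^{k+1} = x^k - \gamma g^k$, where $\mathcal{C}_i^k\in\mathbb{B}^d(\omega_i)$ are drawn independently across $i$ and $k$. Let $\sigma_k^2 = \frac{1}{n}\sum_i\omega_i\|h_i^k - \alpha_i\nabla f_i(T_i(x^* ))\|^2$ and $\mathcal{D}^k = \|x^k - x^*\|^2 + \frac{4}{n\min_i\beta_i}\gamma^2\sigma_k^2$. If \[ 0<\gamma\leq\left(L_\alpha + \frac{2\max_i\{L_i\alpha_i^2\omega_i\}}{n} + \frac{4\max_i\{\beta_i\omega_iL_i\alpha_i^2\}}{n\min_i\beta_i}\right)^{-1},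 \] then for all $k\geq0$, $\mathbb{E}[\mathcal{D}^k]\leq\max\left\{(1-\gamma\mu_\alpha)^k, \left(1 - \tfrac12\min_i\beta_i\right)^k\right\}\mathcal{D}^0$.
   Context: A (random) operator $\mathcal{C}$ belongs to $\mathbb{B}^d(\omega)$ if $\mathbb{E}[\mathcal{C}(x)] = x$ and $\mathbb{E}\|\mathcal{C}(x)-x\|^2\leq\omega\|x\|^2$ for all $x$. A differentiable $g$ is $L$-smooth if $\|\nabla g(x)-\nabla g(y)\|\leq L\|x-y\|$, and $\mu$-strongly convex if $g(x)\geq g(y)+\langle\nabla g(y),x-y\rangle+\frac{\mu}{2}\|x-y\|^2$, for all $x,y$. *)

(* Defs.v *)
From HB Require Import structures.
From mathcomp Require Import all_boot all_order all_algebra.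
From mathcomp Require Import all_classical all_reals all_analysis.
Set Implicit Arguments. Unset Strict Implicit. Unset Printing Implicit Defensive.
Import Order.TTheory GRing.Theory Num.Theory.
Import numFieldNormedType.Exports.
Local Open Scope classical_set_scope.
Local Open Scope ring_scope.

Section Defs.
Variable R : realType.

Definition dotv d (u v : 'rV[R]_d) : R := \sum_(j < d) u ord0 j * v ord0 j.
Definition enorm d (u : 'rV[R]_d) : R := Num.sqrt (dotv u u).

(* gradient: the row vector of partial derivatives, i.e. the Riesz
   representative of the (Frechet) differential 'd g x *)
Definition grad d (g : 'rV[R]_d -> R) (x : 'rV[R]_d) : 'rV[R]_d :=
  \row_(j < d) ('d g x (delta_mx ord0 j : 'rV[R]_d)).

Definition L_smooth d (g : 'rV[R]_d -> R) (L : R) :=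
  (forall x, differentiable g x) /\
  forall x y, enorm (grad g x - grad g y) <= L * enorm (x - y).

Definition strongly_convex d (g : 'rV[R]_d -> R) (mu : R) :=
  (forall x, differentiable g x) /\
  forall x y, g x >= g y + dotv (grad g y) (x - y) + mu / 2 * enorm (x - y) ^+ 2.

Definition is_minimizer d (g : 'rV[R]_d -> R) (x : 'rV[R]_d) :=
  forall y, g x <= g y.

(* A random operator C, realized on a probability space (Xi, P) as
   C : Xi -> R^d -> R^d, belongs to B^d(omega):
   E[C(x)] = x (componentwise, with integrable components) and
   E ||C(x) - x||^2 <= omega ||x||^2. *)
Definition in_B dXi (Xi : measurableType dXi) (P : probability Xi R) d
  (C : Xi -> 'rV[R]_d -> 'rV[R]_d) (omega : R) :=
  forall x : 'rV[R]_d,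
    (forall j : 'I_d,
       P.-integrable setT (fun z => ((C z x) ord0 j)%:E) /\
       (\int[P]_z ((C z x) ord0 j)%:E = (x ord0 j)%:E)%E) /\
    (\int[P]_z ((enorm (C z x - x)) ^+ 2)%:E <= (omega * enorm x ^+ 2)%:E)%E.

(* DIANA applied to ftilde, driven by a realization xi of all the draws:
   xi k i is the outcome used by compressor C_i^k. Returns (x^k, h^k). *)
Fixpoint diana n d dXi (Xi : measurableType dXi)
  (C : nat -> 'I_n -> Xi -> 'rV[R]_d -> 'rV[R]_d)
  (gradf : 'I_n -> 'rV[R]_d -> 'rV[R]_d) (alpha beta : 'I_n -> R)
  (xloc : 'I_n -> 'rV[R]_d) (gamma : R)
  (x0 : 'rV[R]_d) (h0 : 'I_n -> 'rV[R]_d) (xi : nat -> 'I_n -> Xi) (k : nat)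
  : 'rV[R]_d * ('I_n -> 'rV[R]_d) :=
  match k with
  | 0%N => (x0, h0)
  | k'.+1 =>
    let st := diana C gradf alpha beta xloc gamma x0 h0 xi k' in
    let x := st.1 in let h := st.2 in
    let Delta i := alpha i *: gradf i (alpha i *: x + (1 - alpha i) *: xloc i) - h i in
    let Dhat i := C k' i (xi k' i) (Delta i) in
    let g := n%:R^-1 *: \sum_(i < n) (h i + Dhat i) in
    (x - gamma *: g, fun i => h i + beta i *: Dhat i)
  end.

(* Expectation over independent draws: integrate successively (in the
   order of the list l) over the coordinates (k,i) of xi, the coordinate
   (k,i) being distributed according to P k i; since the coordinates are
   drawn from a product of the laws P k i, this is the expectation with
   respect to the product probability (i.e. independent draws). *)
Fixpoint iexp n dXi (Xi : measurableType dXi) (P : nat -> 'I_n -> probability Xi R)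
  (l : seq (nat * 'I_n)) (F : (nat -> 'I_n -> Xi) -> \bar R)
  (xi : nat -> 'I_n -> Xi) : \bar R :=
  match l with
  | [::] => F xi
  | (k, i) :: l' =>
      (\int[P k i]_z iexp P l' F
          (fun k0 i0 => if (k0 == k) && (i0 == i) then z else xi k0 i0))%E
  end.

(* E[F] where F depends only on the draws of iterations 0..K-1 *)
Definition expect_upto n dXi (Xi : measurableType dXi)
  (P : nat -> 'I_n -> probability Xi R) (K : nat)
  (F : (nat -> 'I_n -> Xi) -> \bar R) : \bar R :=
  iexp P [seq (k, i) | k <- iota 0 K, i <- enum 'I_n] F (fun _ _ => point).

End Defs.

(* Main.v *)
Require Import Defs.
From HB Require Import structures.
From mathcomp Require Import all_boot all_order all_algebra.
From mathcomp Require Import all_classical all_reals all_analysis.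
From mathcomp Require Import ring lra.
From mathcomp Require Import measurable_realfun.
Set Implicit Arguments. Unset Strict Implicit. Unset Printing Implicit Defensive.
Import Order.TTheory GRing.Theory Num.Theory.
Import numFieldNormedType.Exports.
Local Open Scope classical_set_scope.
Local Open Scope ring_scope.
Section Vec.
Variables (R : realType) (d : nat).
Local Notation V := 'rV[R]_d.
Implicit Types u v w x z : V.

Lemma dotvC u v : dotv u v = dotv v u.
Proof. by rewrite /dotv; apply: eq_bigr => j _; rewrite mulrC. Qed.

Lemma dotvDl u v w : dotv (u + v) w = dotv u w + dotv v w.
Proof. by rewrite /dotv -big_split; apply: eq_bigr => j _; rewrite !mxE mulrDl. Qed.

Lemma dotvZl a u v : dotv (a *: u) v = a * dotv u v.
Proof. by rewrite /dotv mulr_sumr; apply: eq_bigr => j _; rewrite !mxE mulrA. Qed.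

Lemma dotvNl u v : dotv (- u) v = - dotv u v.
Proof. by rewrite -scaleN1r dotvZl mulN1r. Qed.

Lemma dotvBl u v w : dotv (u - v) w = dotv u w - dotv v w.
Proof. by rewrite dotvDl dotvNl. Qed.

Lemma dotvDr u v w : dotv u (v + w) = dotv u v + dotv u w.
Proof. by rewrite dotvC dotvDl !(dotvC u). Qed.

Lemma dotvZr a u v : dotv u (a *: v) = a * dotv u v.
Proof. by rewrite dotvC dotvZl dotvC. Qed.

Lemma dotvNr u v : dotv u (- v) = - dotv u v.
Proof. by rewrite dotvC dotvNl dotvC. Qed.

Lemma dotvBr u v w : dotv u (v - w) = dotv u v - dotv u w.
Proof. by rewrite dotvDr dotvNr. Qed.

Lemma dotv0l v : dotv 0 v = 0.
Proof. by rewrite /dotv big1 // => j _; rewrite mxE mul0r. Qed.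

Lemma dotv0r v : dotv v 0 = 0.
Proof. by rewrite dotvC dotv0l. Qed.

Lemma dotv_suml n (F : 'I_n -> V) v :
  dotv (\sum_(i < n) F i) v = \sum_(i < n) dotv (F i) v.
Proof.
elim/big_rec2: _ => [|i a x _ <-]; first by rewrite dotv0l.
by rewrite dotvDl.
Qed.

Lemma dotv_sumr n (F : 'I_n -> V) v :
  dotv v (\sum_(i < n) F i) = \sum_(i < n) dotv v (F i).
Proof. by rewrite dotvC dotv_suml; apply: eq_bigr => i _; rewrite dotvC. Qed.

Lemma dotvv_ge0 v : 0 <= dotv v v.
Proof. by rewrite /dotv; apply: sumr_ge0 => j _; rewrite -expr2 sqr_ge0. Qed.

Lemma enorm2 v : enorm v ^+ 2 = dotv v v.
Proof. by rewrite /enorm sqr_sqrtr // dotvv_ge0. Qed.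

Lemma enorm_ge0 v : 0 <= enorm v.
Proof. exact: sqrtr_ge0. Qed.

Lemma dotvv_eq0 v : dotv v v = 0 -> v = 0.
Proof.
move=> /eqP; rewrite /dotv psumr_eq0; last by move=> j _; rewrite -expr2 sqr_ge0.
move=> /allP H; apply/rowP => j; rewrite mxE.
have := H j (mem_index_enum j); rewrite -expr2 sqrf_eq0 /=.
by move/eqP.
Qed.

Definition nsq v := dotv v v.

Lemma nsqD u v : nsq (u + v) = nsq u + 2 * dotv u v + nsq v.
Proof. rewrite /nsq !dotvDl !dotvDr (dotvC v u); ring. Qed.

Lemma nsqB u v : nsq (u - v) = nsq u - 2 * dotv u v + nsq v.
Proof. rewrite /nsq !dotvBl !dotvBr (dotvC v u); ring. Qed.

Lemma nsqZ a v : nsq (a *: v) = a ^+ 2 * nsq v.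
Proof. by rewrite /nsq dotvZl dotvZr mulrA expr2. Qed.

Lemma nsqN v : nsq (- v) = nsq v.
Proof. by rewrite /nsq dotvNl dotvNr opprK. Qed.

Lemma nsq_ge0 v : 0 <= nsq v.
Proof. exact: dotvv_ge0. Qed.

Lemma dotv_le u v : 2 * dotv u v <= nsq u + nsq v.
Proof. have := nsq_ge0 (u - v); rewrite nsqB; lra. Qed.

Lemma cauchy_schwarz u v : dotv u v <= enorm u * enorm v.
Proof.
have [u0|u0] := eqVneq (enorm u) 0.
  have : dotv u u = 0 by rewrite -enorm2; move: u0 => /= ->; rewrite expr2 mulr0.
  by move/dotvv_eq0 => ->; rewrite dotv0l mulr_ge0 // enorm_ge0.
have [v0|v0] := eqVneq (enorm v) 0.
  have : dotv v v = 0 by rewrite -enorm2; move: v0 => /= ->; rewrite expr2 mulr0.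
  by move/dotvv_eq0 => ->; rewrite dotv0r mulr_ge0 // enorm_ge0.
have up : 0 < enorm u by rewrite lt0r u0 enorm_ge0.
have vp : 0 < enorm v by rewrite lt0r v0 enorm_ge0.
have := dotv_le ((enorm u)^-1 *: u) ((enorm v)^-1 *: v).
rewrite !nsqZ /nsq -!enorm2 dotvZl dotvZr !exprVn !mulVf ?expf_neq0 //.
move=> H.
have t1 : (enorm u)^-1 * ((enorm v)^-1 * dotv u v) <= 1 by lra.
have -> : dotv u v = (enorm u * enorm v) * ((enorm u)^-1 * ((enorm v)^-1 * dotv u v)).
  by field; rewrite u0 v0.
rewrite -[X in _ <= X](mulr1 (enorm u * enorm v)).
by apply: ler_wpM2l => //; apply: mulr_ge0; apply: enorm_ge0.
Qed.

Lemma vec_rearr x u v z : x - (u + v) - z = x - z - u - v.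
Proof. by rewrite opprD addrA (addrAC _ (- v) (- z)) (addrAC x (- u) (- z)). Qed.
Lemma vec_rearr2 (h y g : V) : h + y - g = (h - g) + y.
Proof. by rewrite addrAC. Qed.
End Vec.

Section Grad.
Variables (R : realType) (d : nat).
Local Notation V := 'rV[R]_d.
Implicit Types u v w x y : V.

Lemma enormZ a v : enorm (a *: v) = `|a| * enorm v.
Proof.
by rewrite /enorm -/(nsq _) nsqZ sqrtrM ?sqr_ge0 // sqrtr_sqr.
Qed.

Lemma enorm_mul v : enorm v * enorm v = nsq v.
Proof. by rewrite -expr2 enorm2. Qed.

Lemma diff_grad (f : V -> R) x v : 'd f x v = dotv (grad f x) v.
Proof.
rewrite {1}(row_sum_delta v) linear_sum /dotv; apply: eq_bigr => j _.
by rewrite linearZ /= /grad mxE mulrC.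
Qed.

Lemma descent (f : V -> R) L x y : L_smooth f L ->
  f y <= f x + dotv (grad f x) (y - x) + L / 2 * nsq (y - x).
Proof.
move=> [df lip].
set v := y - x.
pose p : R -> V := ( *:%R^~ v) + cst x.
have pd t : is_diff t p (( *:%R^~ v) + 0) by apply: is_diffD.
pose h := f \o p.
have hd t : differentiable h t.
  by apply: differentiable_comp; [exact: ex_diff | exact: df].
have dh t : 'd h t 1 = dotv (grad f (p t)) v.
  rewrite /h diff_comp; [|exact: ex_diff|exact: df].
  rewrite /= diff_val /= diff_grad; congr dotv.
  by rewrite !fctE scale1r addr0.
have Hh (t : R) : is_derive t (1:R) h ('d h t 1).
  by rewrite -deriveE //; apply: derivableP; apply: diff_derivable.
set c1 := dotv (grad f x) v.
set c2 := L / 2 * nsq v.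
pose psi := h - c1 *: (@idfun R) - c2 *: (@idfun R) ^+ 2.
pose dpsi t := 'd h t 1 - c1 *: (1:R) - c2 *: ((2%:R * idfun t ^+ 1) *: (1:R)).
have Hpsi (t : R) : is_derive t (1:R) psi (dpsi t).
  have H1 := is_deriveZ c1 (@is_derive_id _ _ t 1).
  have H2 := is_deriveZ c2 (is_deriveX 2 (@is_derive_id _ _ t 1)).
  exact: (is_deriveB (is_deriveB (Hh t) H1) H2).

have cont : {within `[0, 1], continuous psi}.
  apply: derivable_within_continuous => t _.
  exact: (@ex_derive _ _ _ _ _ _ _ (Hpsi t)).
have [c c01 eq] := MVT ltr01 (fun t _ => Hpsi t) cont.
move: eq; rewrite /psi /dpsi !fctE /= dh.
have c0 : 0 < c by move: c01; rewrite in_itv /= => /andP[].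
have key : dotv (grad f (p c)) v - c1 <= L * c * nsq v.
  rewrite /c1 -dotvBl; apply: (le_trans (cauchy_schwarz _ _)).
  have pc : p c - x = c *: v by rewrite /p !fctE addrK.
  have := lip (p c) x; rewrite pc enormZ gtr0_norm // => H.
  rewrite -enorm_mul mulrA; apply: ler_wpM2r; first exact: enorm_ge0.
  by rewrite -mulrA.
have e2 : c2 * (2 * c) = L * c * nsq v by rewrite /c2; field.
move: key; rewrite /p !fctE => key.
rewrite /h /= /p !fctE scale1r scale0r add0r /v subrK.
move=> E.
have E2 : f y - c1 * 1 - c2 * 1 ^+ 2 - (f x - c1 * 0 - c2 * 0 ^+ 2) =
  (dotv (grad f (c *: (y - x) + x)) (y - x) - c1 * 1 - c2 * ((2 * c ^+ 1) * 1)) * (1 - 0) := E.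
move: E2; rewrite !mulr1 !mulr0 expr1n expr0n /= mulr0 !subr0 expr1 mulr1 e2.
rewrite /v in key; lra.
Qed.

End Grad.


Lemma le_integral_nm (R : realType) dT (T : measurableType dT)
  (mu : {measure set T -> \bar R}) (f1 f2 : T -> \bar R) :
  (forall x, (0 <= f1 x)%E) -> (forall x, (f1 x <= f2 x)%E) ->
  (\int[mu]_x f1 x <= \int[mu]_x f2 x)%E.
Proof.
move=> f10 f12.
rewrite !ge0_integralTE //; last by move=> x; exact: le_trans (f10 x) (f12 x).
apply: ereal_sup_le => _ [h hf <-]; exists h => // x.
exact: le_trans (hf x) (f12 x).
Qed.

#[local] Hint Resolve measurableT : core.
Section Core.
Variables (R : realType) (d : nat) (dXi : measure_display) (Xi : measurableType dXi).
Variable (P : probability Xi R).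
Local Notation V := 'rV[R]_d.

Lemma core (Cc : Xi -> V -> V) om (hC : in_B P Cc om) (D p b : V) (s e c be K : R) :
  0 <= s -> 0 <= e ->
  (\int[P]_z (s * nsq (p - c *: Cc z D) + e * nsq (b + be *: Cc z D) + K)%:E <=
   (s * nsq (p - c *: D) + e * nsq (b + be *: D) + K
     + (s * c ^+ 2 + e * be ^+ 2) * om * nsq D)%:E)%E.
Proof.
move=> s0 e0.
have [hC1 hC2] := hC D.
pose W z := Cc z D - D.
have hW j : P.-integrable setT (fun z => (W z ord0 j)%:E).
  have -> : (fun z => (W z ord0 j)%:E) = (fun z => (Cc z D ord0 j)%:E - (cst (D ord0 j) z)%:E)%E.
    by apply/funext => z /=; rewrite /W !mxE EFinB.
  apply: integrableB => //; first exact: (hC1 j).1.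
  exact: finite_measure_integrable_cst.
have EW j : (\int[P]_z (W z ord0 j)%:E = 0)%E.
  have -> : (fun z => (W z ord0 j)%:E) = (fun z => (Cc z D ord0 j)%:E - (cst (D ord0 j) z)%:E)%E.
    by apply/funext => z /=; rewrite /W !mxE EFinB.
  rewrite integralB //; first last.
  - exact: finite_measure_integrable_cst.
  - exact: (hC1 j).1.
  rewrite (hC1 j).2 (integral_cst _ _ (D ord0 j)%:E) //.
  have P1 : (P : {measure set Xi -> \bar R}) setT = 1%E by exact: probability_setT.
  rewrite P1 mule1.
  by rewrite subee.
set q := (- 2 * s * c) *: (p - c *: D) + (2 * e * be) *: (b + be *: D).
set ka := s * c ^+ 2 + e * be ^+ 2.
set A0 := s * nsq (p - c *: D) + e * nsq (b + be *: D) + K.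
have ident z : s * nsq (p - c *: Cc z D) + e * nsq (b + be *: Cc z D) + K =
    A0 + (dotv q (W z) + ka * nsq (W z)).
  have -> : Cc z D = D + W z by rewrite /W addrC subrK.
  have -> : p - c *: (D + W z) = (p - c *: D) - c *: W z by rewrite scalerDr opprD addrA.
  have -> : b + be *: (D + W z) = (b + be *: D) + be *: W z by rewrite scalerDr addrA.
  rewrite /q /A0 /ka; move: (p - c *: D) (b + be *: D) (W z) => P0 B0 W0.
  rewrite nsqB nsqD !nsqZ !dotvZr dotvDl !dotvZl; ring.
have mW j : measurable_fun setT (fun z => W z ord0 j).
  by apply/measurable_EFinP; exact: measurable_int (hW j).
have iq : P.-integrable setT (fun z => (dotv q (W z))%:E).
  have -> : (fun z => (dotv q (W z))%:E) =
      (fun z => \sum_(j < d) ((q ord0 j)%:E * (W z ord0 j)%:E))%E.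
    by apply/funext => z; rewrite /dotv -sumEFin; apply: eq_bigr => j _; rewrite EFinM.
  by apply: integrable_sum => // j _; apply: integrableZl => //; exact: hW.
have nW z : nsq (W z) = enorm (Cc z D - D) ^+ 2 by rewrite enorm2.
have iN : P.-integrable setT (fun z => (nsq (W z))%:E).
  apply/integrableP; split.
    apply/measurable_EFinP; rewrite /nsq /dotv.
    apply: (@measurable_sum _ _ _ setT _ _ (fun j z => W z ord0 j * W z ord0 j)) => j.
    by apply: measurable_funM; exact: mW.
  under eq_integral do rewrite gee0_abs ?lee_fin ?nsq_ge0 // nW.
  by apply: (le_lt_trans hC2); exact: ltry.
rewrite (eq_integral (fun z => (A0%:E + ((dotv q (W z))%:E + ka%:E * (nsq (W z))%:E)))%E);
  last by move=> z _; rewrite ident EFinD EFinD.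
rewrite integralD //; first last.
- by apply: integrableD => //; apply: integrableZl.
- exact: finite_measure_integrable_cst.
rewrite integralD //; last by apply: integrableZl.
rewrite integralZl //.
have P1 : (P : {measure set Xi -> \bar R}) setT = 1%E by exact: probability_setT.
rewrite (integral_cst _ _ A0%:E) // P1 mule1.
have -> : (\int[P]_z (dotv q (W z))%:E = 0)%E.
  have -> : (fun z => (dotv q (W z))%:E) =
      (fun z => \sum_(j < d) ((q ord0 j)%:E * (W z ord0 j)%:E))%E.
    by apply/funext => z; rewrite /dotv -sumEFin; apply: eq_bigr => j _; rewrite EFinM.
  rewrite integral_sum //; last by move=> j; apply: integrableZl => //; exact: hW.
  by apply: big1 => j _; rewrite integralZl // EW mule0.
have I1 : (\int[P]_x (nsq (W x))%:E <= (om * nsq D)%:E)%E.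
  by under eq_integral do rewrite nW; rewrite /nsq -enorm2.
have I0 : (0 <= \int[P]_x (nsq (W x))%:E)%E.
  by apply: integral_ge0 => z _; rewrite lee_fin nsq_ge0.
have ka0 : 0 <= ka by rewrite /ka addr_ge0 // mulr_ge0 // sqr_ge0.
move: (\int[P]_x (nsq (W x))%:E)%E I0 I1 => [r| |] // I0 I1.
rewrite -EFinM -!EFinD lee_fin.
rewrite lee_fin in I1.
have : ka * r <= ka * (om * nsq D) by apply: ler_wpM2l.
rewrite /A0; lra.
Qed.
End Core.


Section Block.
Variables (R : realType) (d n : nat) (dXi : measure_display) (Xi : measurableType dXi).
Variable (P : nat -> 'I_n -> probability Xi R).
Local Notation V := 'rV[R]_d.
Variable (C : nat -> 'I_n -> Xi -> V -> V) (om : 'I_n -> R).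
Hypothesis hC : forall k i, in_B (P k i) (C k i) (om i).
Variable (k : nat) (a : V) (b D : 'I_n -> V) (s c : R) (e be : 'I_n -> R).
Hypothesis s0 : 0 <= s.
Hypothesis e0 : forall i, 0 <= e i.

Definition Psi (Y : 'I_n -> V) :=
  s * nsq (a - c *: \sum_(i < n) Y i) + \sum_(i < n) e i * nsq (b i + be i *: Y i).
Definition rr i := (s * c ^+ 2 + e i * be i ^+ 2) * om i * nsq (D i).
Definition Yof (S : seq 'I_n) (xi : nat -> 'I_n -> Xi) i :=
  if i \in S then D i else C k i (xi k i) (D i).
Definition Phi S xi := Psi (Yof S xi) + \sum_(i < n | i \in S) rr i.

Lemma Psi_split (Y : 'I_n -> V) i v :
  Psi (fun j => if j == i then v else Y j) =
  s * nsq ((a - c *: \sum_(j < n | j != i) Y j) - c *: v)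
  + e i * nsq (b i + be i *: v)
  + \sum_(j < n | j != i) e j * nsq (b j + be j *: Y j).
Proof.
rewrite /Psi (bigD1 i) //= eqxx (bigD1 i (P := xpredT)) //= eqxx.
rewrite (eq_bigr Y); last by move=> j /negbTE ->.
rewrite (eq_bigr (fun j => e j * nsq (b j + be j *: Y j))); last by move=> j /negbTE ->.
by rewrite scalerDr opprD addrA (addrAC a) addrA.
Qed.


Lemma iexp_ge0 l F xi : (forall xi, (0 <= F xi)%E) -> (0 <= iexp P l F xi)%E.
Proof.
move=> F0; elim: l xi => [|[k0 i0] l IH] xi /=; first exact: F0.
by apply: integral_ge0 => z _; apply: IH.
Qed.

Lemma iexp_cat l1 l2 F xi : iexp P (l1 ++ l2) F xi = iexp P l1 (iexp P l2 F) xi.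
Proof.
elim: l1 xi => [|[k0 i0] l IH] xi //=.
by apply: eq_integral => z _; rewrite IH.
Qed.

Variable Q : (nat -> 'I_n -> Xi) -> Prop.
Hypothesis HQ : forall xi i z, Q xi ->
  Q (fun k0 i0 => if (k0 == k) && (i0 == i) then z else xi k0 i0).

Lemma block (l : seq 'I_n) : uniq l -> forall S, (forall i, i \in l -> i \notin S) ->
  forall F, (forall xi, (0 <= F xi)%E) -> (forall xi, Q xi -> (F xi <= (Phi S xi)%:E)%E) ->
  forall xi, Q xi -> (iexp P [seq (k, i) | i <- l] F xi <= (Phi (S ++ l) xi)%:E)%E.
Proof.
elim: l => [|i l IH] /= Hu S HS F F0 FS xi Qxi; first by rewrite cats0; exact: FS.
move/andP: Hu => [il ul].
have iS : i \notin S by apply: HS; rewrite mem_head.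
pose upd z := fun k0 i0 => if (k0 == k) && (i0 == i) then z else xi k0 i0.
apply: (@le_trans _ _ (\int[P k i]_z (Phi (S ++ l) (upd z))%:E)%E).
  apply: le_integral_nm => z; first exact: iexp_ge0.
  apply: IH => //; last exact: HQ.
  by move=> j jl; apply: HS; rewrite in_cons jl orbT.
have EY z : Yof (S ++ l) (upd z) =
    (fun j => if j == i then C k i z (D i) else Yof (S ++ i :: l) xi j).
  apply/funext => j; rewrite /Yof /upd !mem_cat in_cons eqxx /=.
  case: (eqVneq j i) => [->|ji] /=; last by [].
  by rewrite (negbTE iS) (negbTE il).
have EY1 : Yof (S ++ i :: l) xi =
    (fun j => if j == i then D i else Yof (S ++ i :: l) xi j).
  apply/funext => j; case: eqVneq => // ->.
  by rewrite /Yof mem_cat mem_head orbT.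
have Er : \sum_(j < n | j \in S ++ i :: l) rr j = rr i + \sum_(j < n | j \in S ++ l) rr j.
  rewrite (bigD1 i) /=; last by rewrite mem_cat mem_head orbT.
  congr (_ + _); apply: eq_bigl => j; rewrite !mem_cat in_cons.
  case: eqVneq => [->|] /=; last by rewrite andbT.
  by rewrite (negbTE iS) (negbTE il).
rewrite /Phi EY1 Er.
under eq_integral do rewrite EY Psi_split -addrA.
rewrite Psi_split.
set Y1 := Yof (S ++ i :: l) xi.
set p := a - c *: \sum_(j < n | j != i) Y1 j.
set K := \sum_(j < n | j != i) e j * nsq (b j + be j *: Y1 j) + \sum_(j < n | j \in S ++ l) rr j.
have := @core _ _ _ _ (P k i) _ _ (hC k i) (D i) p (b i) s (e i) c (be i) K s0 (e0 i).
move=> H; apply: (le_trans H); rewrite lee_fin /K /rr; lra.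
Qed.

Lemma block_full F : (forall xi, (0 <= F xi)%E) ->
  (forall xi, Q xi -> (F xi <= (Psi (fun i => C k i (xi k i) (D i)))%:E)%E) ->
  forall xi, Q xi ->
  (iexp P [seq (k, i) | i <- enum 'I_n] F xi <= (Psi D + \sum_(i < n) rr i)%:E)%E.
Proof.
move=> F0 FB xi Qxi.
have := @block (enum 'I_n) (enum_uniq _) [::] (fun i _ => negbT (in_nil i)) F F0 _ xi Qxi.
rewrite /= /Phi.
have -> : Yof (enum 'I_n) xi = D.
  apply/funext => i; rewrite /Yof; have -> : i \in enum 'I_n by rewrite mem_enum. done.
have -> : \sum_(i < n | i \in enum 'I_n) rr i = \sum_(i < n) rr i by apply: eq_bigl => i; rewrite mem_enum.
apply => xi' Q'.
rewrite big_pred0 // addr0.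
have -> : Yof [::] xi' = (fun i => C k i (xi' k i) (D i)) by [].
exact: FB.
Qed.
End Block.

Section Coco.
Variables (R : realType) (d : nat).
Local Notation V := 'rV[R]_d.

Lemma cocoercive (phi : V -> R) (G : V -> V) (L : R) : 0 < L ->
  (forall x y, phi x + dotv (G x) (y - x) <= phi y) ->
  (forall x y, phi y <= phi x + dotv (G x) (y - x) + L / 2 * nsq (y - x)) ->
  forall y z, nsq (G y - G z) <= 2 * L * (phi y - phi z - dotv (G z) (y - z)).
Proof.
move=> L0 cv ds y z.
set v := G y - G z; set u := y - L^-1 *: v.
have h1 := cv z u; have h2 := ds y u.
have e1 : u - z = (y - z) - L^-1 *: v by rewrite /u addrAC.
have e2 : u - y = - (L^-1 *: v) by rewrite /u addrAC subrr add0r.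
rewrite e1 dotvBr dotvZr in h1; rewrite e2 nsqN nsqZ dotvNr dotvZr in h2.
have e3 : dotv (G y) v - dotv (G z) v = nsq v by rewrite -dotvBl.
have Ln : L != 0 by rewrite gt_eqF.
have q : L / 2 * (L^-1 ^+ 2 * nsq v) = L^-1 * nsq v / 2 by field.
rewrite q in h2.
have q2 : L^-1 * dotv (G y) v - L^-1 * dotv (G z) v = L^-1 * nsq v by rewrite -mulrBr e3.
have H : L^-1 * nsq v / 2 <= phi y - phi z - dotv (G z) (y - z) by lra.
have -> : nsq v = 2 * L * (L^-1 * nsq v / 2) by field.
by apply: ler_wpM2l => //; rewrite mulr_ge0 // ltW.
Qed.

Lemma dianah_ineq (u w : V) (be om : R) : 0 < be -> 0 <= om -> be <= (om + 1)^-1 ->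
  nsq (u + be *: (w - u)) + be ^+ 2 * om * nsq (w - u) <= (1 - be) * nsq u + be * nsq w.
Proof.
move=> b0 o0 bo.
have bb : be * (om + 1) <= 1.
  by rewrite -ler_pdivlMr ?mul1r //; lra.
have bb2 : be ^+ 2 * (om + 1) <= be.
  nra.
have N0 := nsq_ge0 (w - u).
have : be ^+ 2 * (om + 1) * nsq (w - u) <= be * nsq (w - u) by apply: ler_wpM2r.
have E : nsq (u + be *: (w - u)) = nsq u + 2 * be * dotv u (w - u) + be ^+ 2 * nsq (w - u).
  by rewrite nsqD nsqZ dotvZr mulrA.
have E2 : nsq w = nsq (u + (w - u)) by rewrite addrC subrK.
rewrite E E2 (nsqD u (w - u)).
set D := nsq (w - u); set X := dotv u (w - u).
move=> H.
lra.
Qed.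
Lemma nsqB_le (w u : V) : nsq (w - u) <= 2 * nsq w + 2 * nsq u.
Proof. have := nsq_ge0 (w + u); rewrite nsqD nsqB; lra. Qed.
End Coco.


Lemma term_ineq (R : realFieldType) (M' om be bmin c2 mx1 mx2 al2L B Nu Nw ND NU : R) :
  0 <= M' -> 0 <= om -> 0 < be -> bmin <= be -> 0 <= c2 -> 0 <= B -> 0 <= Nu ->
  NU + be ^+ 2 * om * ND <= (1 - be) * Nu + be * Nw ->
  ND <= 2 * Nw + 2 * Nu ->
  Nw <= 2 * al2L * B ->
  be * om * al2L <= mx2 -> al2L * om <= mx1 ->
  M' * om * NU + (c2 + M' * om * be ^+ 2) * om * ND
  <= (M' * (1 - bmin) + 2 * c2) * (om * Nu) + (2 * M' * mx2 + 4 * c2 * mx1) * B.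
Proof.
move=> M0 o0 b0 bb c0 B0 u0 F1 F2 F3 G2 G1.
set a := M' * om.
have a0 : 0 <= a by rewrite mulr_ge0.
have q0 : 0 <= c2 * om by rewrite mulr_ge0.
have P1 : a * (NU + be ^+ 2 * om * ND) <= a * ((1 - be) * Nu + be * Nw) by apply: ler_wpM2l.
have P2 : (c2 * om) * ND <= (c2 * om) * (2 * Nw + 2 * Nu) by apply: ler_wpM2l.
have P3 : (a * be) * Nw <= (a * be) * (2 * al2L * B) by apply: ler_wpM2l => //; rewrite mulr_ge0 // ltW.
have P4 : (c2 * om) * Nw <= (c2 * om) * (2 * al2L * B) by apply: ler_wpM2l.
have P5 : a * Nu * (1 - be) <= a * Nu * (1 - bmin) by apply: ler_wpM2l; [rewrite mulr_ge0|lra].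
have P6 : M' * B * (be * om * al2L) <= M' * B * mx2 by apply: ler_wpM2l => //; rewrite mulr_ge0.
have P7 : c2 * B * (al2L * om) <= c2 * B * mx1 by apply: ler_wpM2l => //; rewrite mulr_ge0.
have E : M' * om * NU + (c2 + M' * om * be ^+ 2) * om * ND =
  a * (NU + be ^+ 2 * om * ND) + (c2 * om) * ND by rewrite /a; ring.
rewrite E.
have E2 : a * ((1 - be) * Nu + be * Nw) = a * Nu * (1 - be) + (a * be) * Nw by ring.
rewrite E2 in P1.
have E3 : (a * be) * (2 * al2L * B) = 2 * (M' * B * (be * om * al2L)) by rewrite /a; ring.
rewrite E3 in P3.
have E4 : (c2 * om) * (2 * Nw + 2 * Nu) = 2 * ((c2 * om) * Nw) + 2 * (c2 * om * Nu) by ring.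
rewrite E4 in P2.
have E5 : (c2 * om) * (2 * al2L * B) = 2 * (c2 * B * (al2L * om)) by ring.
rewrite E5 in P4.
have E6 : (M' * (1 - bmin) + 2 * c2) * (om * Nu) + (2 * M' * mx2 + 4 * c2 * mx1) * B =
  a * Nu * (1 - bmin) + 2 * (c2 * om * Nu) + 2 * (M' * B * mx2) + 4 * (c2 * B * mx1) by rewrite /a; ring.
rewrite E6.
lra.
Qed.

Lemma final_ineq (R : realFieldType) (X dG NG Bf Su S23 g mu Lal M' bmin c2 mx1 mx2 n' K rho : R) :
  0 <= X -> 0 <= Bf -> 0 <= Su -> 0 <= g -> 0 <= M' ->
  Bf + mu / 2 * X <= dG -> NG <= 2 * Lal * Bf ->
  S23 <= (M' * (1 - bmin) + 2 * c2) * Su + (2 * M' * mx2 + 4 * c2 * mx1) * (n' * Bf) ->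
  -2 * g + 2 * g ^+ 2 * Lal + (2 * M' * mx2 + 4 * c2 * mx1) * n' = 2 * g * (g * K - 1) ->
  M' * (1 - bmin) + 2 * c2 = M' * (1 - bmin / 2) ->
  g * K <= 1 -> 1 - g * mu <= rho -> 1 - bmin / 2 <= rho ->
  X - 2 * (g * dG) + g ^+ 2 * NG + S23 <= rho * (X + M' * Su).
Proof.
move=> X0 B0 S0 g0 M0 hb hc hs Hc Hs gK r1 r2.
have P1 : g * (Bf + mu / 2 * X) <= g * dG by apply: ler_wpM2l.
have P2 : g ^+ 2 * NG <= g ^+ 2 * (2 * Lal * Bf) by apply: ler_wpM2l => //; exact: sqr_ge0.
have P3 : Bf * (2 * g * (g * K - 1)) <= 0.
  rewrite mulr_ge0_le0 // mulr_ge0_le0 // ?mulr_ge0 //; lra.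
have P4 : (1 - g * mu) * X <= rho * X by apply: ler_wpM2r.
have P5 : M' * Su * (1 - bmin / 2) <= M' * Su * rho by apply: ler_wpM2l => //; rewrite mulr_ge0.
rewrite Hs in hs.
have E : Bf * (2 * g * (g * K - 1)) = Bf * (-2 * g + 2 * g ^+ 2 * Lal + (2 * M' * mx2 + 4 * c2 * mx1) * n') by rewrite Hc.
rewrite E in P3.
have E1 : g * (Bf + mu / 2 * X) = g * Bf + (g * mu) * X / 2 by ring.
rewrite E1 in P1.
have E2 : (1 - g * mu) * X = X - (g * mu) * X by ring.
rewrite E2 in P4.
have E3 : M' * (1 - bmin / 2) * Su = M' * Su * (1 - bmin / 2) by ring.
rewrite E3 in hs.
have E4 : rho * (X + M' * Su) = rho * X + M' * Su * rho by ring.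
rewrite E4.
have E5 : Bf * (-2 * g + 2 * g ^+ 2 * Lal + (2 * M' * mx2 + 4 * c2 * mx1) * n') =
  -2 * (g * Bf) + g ^+ 2 * (2 * Lal * Bf) + (2 * M' * mx2 + 4 * c2 * mx1) * (n' * Bf) by ring.
rewrite E5 in P3.
lra.
Qed.

Unset Implicit Arguments. Set Strict Implicit. Set Printing Implicit Defensive.

Theorem theorem4 (R : realType) (n d : nat) (hn : (0 < n)%N)
  (f : 'I_n -> 'rV[R]_d -> R) (L mu : 'I_n -> R) (xloc : 'I_n -> 'rV[R]_d)
  (hsmooth : forall i, L_smooth (f i) (L i))
  (hmu : forall i, 0 < mu i)
  (hconv : forall i, strongly_convex (f i) (mu i))
  (hxloc : forall i, is_minimizer (f i) (xloc i))
  (alpha : 'I_n -> R) (halpha : forall i, 0 < alpha i < 1)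
  (xstar : 'rV[R]_d)
  (hxstar : is_minimizer
     (fun x => n%:R^-1 * \sum_(i < n) f i (alpha i *: x + (1 - alpha i) *: xloc i))
     xstar)
  (omega beta : 'I_n -> R)
  (homega : forall i, 0 <= omega i)
  (hbeta : forall i, 0 < beta i <= (omega i + 1)^-1)
  (dXi : measure_display) (Xi : measurableType dXi)
  (P : nat -> 'I_n -> probability Xi R)
  (C : nat -> 'I_n -> Xi -> 'rV[R]_d -> 'rV[R]_d)
  (hC : forall k i, in_B (P k i) (C k i) (omega i))
  (x0 : 'rV[R]_d) (h0 : 'I_n -> 'rV[R]_d) (gamma : R)
  (hgamma_pos : 0 < gamma)
  (hgamma : gamma <=
     (n%:R^-1 * \sum_(i < n) alpha i ^+ 2 * L i
      + 2 * \big[Order.max/0]_(i < n) (L i * alpha i ^+ 2 * omega i) / n%:R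
      + 4 * \big[Order.max/0]_(i < n) (beta i * omega i * L i * alpha i ^+ 2)
          / (n%:R * \big[Order.min/1]_(i < n) beta i))^-1) :
  let st := diana C (fun i => grad (f i)) alpha beta xloc gamma x0 h0 in
  let sigma2 k xi := n%:R^-1 * \sum_(i < n) omega i *
      enorm ((st xi k).2 i
             - alpha i *: grad (f i) (alpha i *: xstar + (1 - alpha i) *: xloc i)) ^+ 2 in
  let bmin := \big[Order.min/1]_(i < n) beta i in
  let D k xi := enorm ((st xi k).1 - xstar) ^+ 2
                + 4 / (n%:R * bmin) * gamma ^+ 2 * sigma2 k xi in
  let mualpha := n%:R^-1 * \sum_(i < n) alpha i ^+ 2 * mu i in
  forall k : nat,
    (expect_upto P k (fun xi => (D k xi)%:E)
     <= (Order.max ((1 - gamma * mualpha) ^+ k) ((1 - bmin / 2) ^+ k)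
         * D 0%N (fun _ _ => point))%:E)%E.
Proof.
move=> st sigma2 bmin D mualpha.
have st_dep : forall K xi xi', (forall k0, (k0 < K)%N -> xi k0 = xi' k0) -> st xi K = st xi' K.
  elim=> [|K IH] xi xi' H //.
  have E : st xi K = st xi' K by apply: IH => k0 k0K; apply: H; exact: ltnW.
  rewrite /st /= -/st E.
  by rewrite (H K (ltnSn K)).
have iexp0 : forall l xi, iexp P l (fun _ => 0%E) xi = 0%E.
  elim=> [|[k0 i0] l IH] xi //=.
  by under eq_integral do rewrite IH; rewrite integral0.
have [d0|dpos] := eqVneq d 0%N.
  subst d.
  have e0 : forall u : 'rV[R]_0, enorm u = 0 by move=> u; rewrite /enorm /dotv big_ord0 sqrtr0.
  have D0 : forall k xi, D k xi = 0.
    by move=> k' xi; rewrite /D /sigma2 e0 big1 ?mulr0 ?expr2 ?mulr0 ?addr0 // => i _; rewrite e0 expr2 !mulr0.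
  move=> k.
  have -> : (fun xi => (D k xi)%:E) = (fun _ => 0%E) by apply/funext => xi; rewrite D0.
  by rewrite /expect_upto iexp0 D0 mulr0.
have d0 : (0 < d)%N by rewrite lt0n.
pose T i x := alpha i *: x + (1 - alpha i) *: xloc i.
pose gi i x := alpha i *: grad (f i) (T i x).
pose phi i x := f i (T i x).
have TB i x y : T i y - T i x = alpha i *: (y - x).
  by rewrite /T scalerBr opprD addrACA subrr addr0.
have phi_lo i x y : phi i x + dotv (gi i x) (y - x) + alpha i ^+ 2 * mu i / 2 * nsq (y - x) <= phi i y.
  have := (hconv i).2 (T i y) (T i x).
  by rewrite TB dotvZr enorm2 -/(nsq _) nsqZ /phi /gi dotvZl; lra.
have phi_hi i x y : phi i y <= phi i x + dotv (gi i x) (y - x) + alpha i ^+ 2 * L i / 2 * nsq (y - x).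
  have := descent (T i x) (T i y) (hsmooth i).
  by rewrite TB nsqZ /phi /gi dotvZr dotvZl; lra.
have muL i : mu i <= L i.
  pose u : 'rV[R]_d := const_mx 1.
  have nu : 0 < nsq u.
    rewrite /nsq /dotv (eq_bigr (fun _ => 1)); last by move=> j _; rewrite mxE mulr1.
    by rewrite sumr_const card_ord ltr0n.
  have h1 := (hconv i).2 u 0; have h2 := descent 0 u (hsmooth i).
  rewrite enorm2 -/(nsq _) in h1.
  have : mu i / 2 * nsq (u - 0) <= L i / 2 * nsq (u - 0) by lra.
  rewrite subr0 => H.
  have := ler_pM2r nu; move=> E; rewrite E in H; lra.
have Lpos i : 0 < L i by apply: lt_le_trans (hmu i) (muL i).
have apos i : 0 < alpha i by case/andP: (halpha i).
have nR : (0 < n%:R :> R) by rewrite ltr0n.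
have nR0 : (n%:R != 0 :> R) by rewrite gt_eqF.
pose ft x := n%:R^-1 * \sum_(i < n) phi i x.
pose Gt x := n%:R^-1 *: \sum_(i < n) gi i x.
pose Lal := n%:R^-1 * \sum_(i < n) alpha i ^+ 2 * L i.
have invr_gt0_nR : 0 < n%:R^-1 :> R by rewrite invr_gt0.
have dotGt x w : dotv (Gt x) w = n%:R^-1 * \sum_(i < n) dotv (gi i x) w.
  by rewrite /Gt dotvZl dotv_suml.
have ft_lo x y : ft x + dotv (Gt x) (y - x) + mualpha / 2 * nsq (y - x) <= ft y.
  have S : \sum_(i < n) (phi i x + dotv (gi i x) (y - x) + alpha i ^+ 2 * mu i / 2 * nsq (y - x))
    <= \sum_(i < n) phi i y by apply: ler_sum => i _; exact: phi_lo.
  rewrite !big_split /= -!mulr_suml in S.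
  have := ler_wpM2l (ltW (invr_gt0_nR)) S.
  by rewrite /ft dotGt /mualpha !mulrDr !mulrA; lra.
have ft_hi x y : ft y <= ft x + dotv (Gt x) (y - x) + Lal / 2 * nsq (y - x).
  have S : \sum_(i < n) phi i y <= \sum_(i < n) (phi i x + dotv (gi i x) (y - x) + alpha i ^+ 2 * L i / 2 * nsq (y - x))
    by apply: ler_sum => i _; exact: phi_hi.
  rewrite !big_split /= -!mulr_suml in S.
  have := ler_wpM2l (ltW (invr_gt0_nR)) S.
  by rewrite /ft dotGt /Lal !mulrDr !mulrA; lra.
have mua0 : 0 <= mualpha.
  by rewrite /mualpha mulr_ge0 ?invr_ge0 ?ler0n // sumr_ge0 // => i _; rewrite mulr_ge0 ?sqr_ge0 // ltW.
have Lal0 : 0 < Lal.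
  rewrite /Lal mulr_gt0 //; rewrite (bigD1 (Ordinal hn)) //=.
  have A : 0 < alpha (Ordinal hn) ^+ 2 * L (Ordinal hn) by rewrite mulr_gt0 ?exprn_gt0.
  have B : 0 <= \sum_(i < n | i != Ordinal hn) alpha i ^+ 2 * L i.
    by apply: sumr_ge0 => i _; rewrite mulr_ge0 ?sqr_ge0 // ltW.
  lra.
have ft_conv x y : ft x + dotv (Gt x) (y - x) <= ft y.
  have := ft_lo x y; have := nsq_ge0 (y - x); nra.
have phi_conv i x y : phi i x + dotv (gi i x) (y - x) <= phi i y.
  have := phi_lo i x y; have := nsq_ge0 (y - x); have := hmu i; have := sqr_ge0 (alpha i).
  move=> a2 m0 N0; have : 0 <= alpha i ^+ 2 * mu i / 2 * nsq (y - x).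
    by rewrite mulr_ge0 // mulr_ge0 // mulr_ge0 // ltW.
  lra.
have ftmin y : ft xstar <= ft y := hxstar y.
have Gstar0 : Gt xstar = 0.
  set g := Gt xstar; set t := Lal^-1.
  have t0 : 0 < t by rewrite invr_gt0.
  have h1 := ftmin (xstar - t *: g); have h2 := ft_hi xstar (xstar - t *: g).
  have e0 : xstar - t *: g - xstar = - (t *: g) by rewrite addrAC subrr add0r.
  rewrite e0 nsqN nsqZ dotvNr dotvZr in h2.
  have e : Lal / 2 * (t ^+ 2 * nsq g) = t / 2 * nsq g by rewrite /t; field; rewrite gt_eqF.
  rewrite e -/(nsq g) in h2.
  have : t / 2 * nsq g <= 0 by lra.
  rewrite pmulr_rle0 ?divr_gt0 // => H.
  apply: dotvv_eq0; apply/eqP; rewrite eq_le H /=; exact: nsq_ge0.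
pose Bi i x := phi i x - phi i xstar - dotv (gi i xstar) (x - xstar).
have Bi0 i x : 0 <= Bi i x by have := phi_conv i xstar x; rewrite /Bi; lra.
have coco_i i x : nsq (gi i x - gi i xstar) <= 2 * (alpha i ^+ 2 * L i) * Bi i x.
  apply: (cocoercive (phi := phi i)) => //; first by rewrite mulr_gt0 ?exprn_gt0.
have coco_t x : nsq (Gt x) <= 2 * Lal * (ft x - ft xstar).
  have := cocoercive Lal0 ft_conv ft_hi x xstar.
  by rewrite Gstar0 subr0 dotv0l subr0.
have sumB x : \sum_(i < n) Bi i x = n%:R * (ft x - ft xstar).
  rewrite /Bi !big_split /= !sumrN -dotv_suml.
  have -> : \sum_(i < n) gi i xstar = n%:R *: Gt xstar by rewrite /Gt scalerA mulfV // scale1r.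
  by rewrite Gstar0 scaler0 dotv0l oppr0 addr0 /ft mulrBr !mulrA mulfV // !mul1r.

pose gs i := gi i xstar.
pose c := gamma / n%:R.
pose M' := 4 / (n%:R * bmin) * gamma ^+ 2 * n%:R^-1.
pose mx1 := \big[Order.max/0]_(i < n) (L i * alpha i ^+ 2 * omega i).
pose mx2 := \big[Order.max/0]_(i < n) (beta i * omega i * L i * alpha i ^+ 2).
pose rho := Order.max (1 - gamma * mualpha) (1 - bmin / 2).
have bpos i : 0 < beta i by case/andP: (hbeta i).
have bmin_le i : bmin <= beta i by apply: bigmin_le.
have bmin1 : bmin <= 1 by apply: bigmin_le_id.
have bmin0 : 0 < bmin.
  apply/bigmin_gtP; split => // i _; exact: bpos.
have mx1_ge i : L i * alpha i ^+ 2 * omega i <= mx1 by apply: le_bigmax.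
have mx2_ge i : beta i * omega i * L i * alpha i ^+ 2 <= mx2 by apply: le_bigmax.
have mx10 : 0 <= mx1 by apply: bigmax_ge_id.
have mx20 : 0 <= mx2 by apply: bigmax_ge_id.
have M'0 : 0 <= M'.
  by rewrite /M' !mulr_ge0 ?invr_ge0 ?sqr_ge0 ?ler0n // ltW // mulr_gt0.
have c20 : 0 <= c ^+ 2 by apply: sqr_ge0.
pose K := n%:R^-1 * \sum_(i < n) alpha i ^+ 2 * L i + 2 * mx1 / n%:R + 4 * mx2 / (n%:R * bmin).
have Kpos : 0 < K.
  rewrite /K -/Lal; have : 0 <= 2 * mx1 / n%:R by rewrite !mulr_ge0 ?invr_ge0 ?ler0n.
  have : 0 <= 4 * mx2 / (n%:R * bmin) by rewrite !mulr_ge0 ?invr_ge0 // ltW // mulr_gt0.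
  lra.
have gK : gamma * K <= 1.
  by rewrite -ler_pdivlMr // mul1r.
have term_i i (y : 'rV[R]_d) (hh : 'I_n -> 'rV[R]_d) :
  M' * omega i * nsq ((hh i - gs i) + beta i *: (gi i y - hh i))
  + (c ^+ 2 + M' * omega i * beta i ^+ 2) * omega i * nsq (gi i y - hh i)
  <= (M' * (1 - bmin) + 2 * c ^+ 2) * (omega i * nsq (hh i - gs i))
     + (2 * M' * mx2 + 4 * c ^+ 2 * mx1) * Bi i y.
  set u := hh i - gs i; set w := gi i y - gs i.
  have eD : gi i y - hh i = w - u by rewrite /u /w opprB addrA subrK.
  rewrite eD.
  have F1 := dianah_ineq u w (bpos i) (homega i) (proj2 (andP (hbeta i))).
  have F2 := nsqB_le w u.
  have F3 : nsq w <= 2 * (alpha i ^+ 2 * L i) * Bi i y by exact: coco_i.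
  apply: term_ineq => //; first [exact: homega|exact: bpos|exact: Bi0|exact: nsq_ge0
    |(by have := mx2_ge i; rewrite [alpha i ^+ 2 * L i]mulrC !mulrA)|(by have := mx1_ge i; rewrite [L i * _]mulrC)|idtac].
have step (y : 'rV[R]_d) (hh : 'I_n -> 'rV[R]_d) :
  nsq ((y - xstar - c *: \sum_(i < n) hh i) - c *: \sum_(i < n) (gi i y - hh i))
  + \sum_(i < n) M' * omega i * nsq ((hh i - gs i) + beta i *: (gi i y - hh i))
  + \sum_(i < n) (c ^+ 2 + M' * omega i * beta i ^+ 2) * omega i * nsq (gi i y - hh i)
  <= rho * (nsq (y - xstar) + M' * \sum_(i < n) omega i * nsq (hh i - gs i)).
  have e1 : (y - xstar - c *: \sum_(i < n) hh i) - c *: \sum_(i < n) (gi i y - hh i)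
      = (y - xstar) - gamma *: Gt y.
    rewrite -addrA -opprD -scalerDr -big_split /=.
    under eq_bigr do rewrite addrC subrK.
    by rewrite /Gt scalerA.
  rewrite e1 (nsqB (y - xstar) (gamma *: Gt y)) nsqZ dotvZr -addrA -big_split /=.
  have hb : ft y - ft xstar + mualpha / 2 * nsq (y - xstar) <= dotv (y - xstar) (Gt y).
    have := ft_lo y xstar.
    rewrite -opprB nsqN dotvNr dotvC.
    move: (ft y) (ft xstar) (dotv (y - xstar) (Gt y)) (nsq (y - xstar)) => a b e N H; lra.
  have hs : \sum_(i < n) (M' * omega i * nsq ((hh i - gs i) + beta i *: (gi i y - hh i))
      + (c ^+ 2 + M' * omega i * beta i ^+ 2) * omega i * nsq (gi i y - hh i))
      <= (M' * (1 - bmin) + 2 * c ^+ 2) * \sum_(i < n) omega i * nsq (hh i - gs i)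
         + (2 * M' * mx2 + 4 * c ^+ 2 * mx1) * (n%:R * (ft y - ft xstar)).
    apply: le_trans; first by apply: ler_sum => i _; exact: term_i.
    by rewrite big_split /= -!mulr_sumr sumB.
  apply: final_ineq hb (coco_t y) hs _ _ gK _ _.
  - exact: nsq_ge0.
  - by have := ftmin y; rewrite subr_ge0.
  - by apply: sumr_ge0 => i _; rewrite mulr_ge0 ?nsq_ge0.
  - exact: ltW.
  - exact: M'0.
  - rewrite /K /M' /c /Lal; field; rewrite ?gt_eqF //.
  - rewrite /M' /c; field; rewrite ?gt_eqF //.
  - by rewrite le_max lexx.
  - by rewrite le_max lexx orbT.
have rho0 : 0 <= rho by rewrite le_max; apply/orP; right; lra.
have D_ge0 j xi : 0 <= D j xi.
  rewrite /D /sigma2; apply: addr_ge0; first by rewrite enorm2 dotvv_ge0.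
  apply: mulr_ge0; first by rewrite mulr_ge0 ?sqr_ge0 // mulr_ge0 // invr_ge0 mulr_ge0 // ltW.
  apply: mulr_ge0; first by rewrite invr_ge0.
  by apply: sumr_ge0 => i _; rewrite mulr_ge0 // enorm2 dotvv_ge0.
have Dval j xi : D j xi = nsq ((st xi j).1 - xstar)
    + M' * \sum_(i < n) omega i * nsq ((st xi j).2 i - gs i).
  rewrite /D /sigma2 enorm2 /M' -[X in _ = _ + X]mulrA; congr (_ + _ * (_ * _)).
  by apply: eq_bigr => i _; rewrite enorm2.
have claim : forall m j cc, 0 <= cc -> forall xi,
    (iexp P [seq (k0, i) | k0 <- iota j m, i <- enum 'I_n]
       (fun xi => (cc * D (j + m)%N xi)%:E) xi <= (cc * rho ^+ m * D j xi)%:E)%E.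
  elim=> [|m IH] j cc cc0 xi.
    by rewrite /= addn0 expr0 mulr1; exact: lexx.
  have -> : [seq (k0, i) | k0 <- iota j m.+1, i <- enum 'I_n] =
    [seq (j, i) | i <- enum 'I_n] ++ [seq (k0, i) | k0 <- iota j.+1 m, i <- enum 'I_n] by [].
  rewrite iexp_cat -addSnnS.
  set x := (st xi j).1; set hv := (st xi j).2.
  pose sc := cc * rho ^+ m.
  have sc0 : 0 <= sc by rewrite mulr_ge0 // exprn_ge0.
  have e0 i : 0 <= sc * (M' * omega i) by apply: mulr_ge0 => //; apply: mulr_ge0 => //; exact: homega.
  pose Q (xi' : nat -> 'I_n -> Xi) := forall k0, (k0 < j)%N -> xi' k0 = xi k0.
  have HQ : forall xi' i z, Q xi' ->
      Q (fun k0 i0 => if (k0 == j) && (i0 == i) then z else xi' k0 i0).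
    move=> xi' i z Qx k0 k0j; rewrite -(Qx k0 k0j); apply/funext => i0.
    by rewrite (ltn_eqF k0j).
  have := @block_full R d n dXi Xi P C omega hC j (x - xstar - c *: \sum_(i < n) hv i)
    (fun i => hv i - gs i) (fun i => gi i x - hv i) sc c (fun i => sc * (M' * omega i)) beta
    sc0 e0 Q HQ.
  move=> BF; apply: le_trans; first apply: BF.
  - move=> xi0; apply: iexp_ge0 => xi1; rewrite lee_fin mulr_ge0 //.
  - move=> xi' Qx; apply: le_trans; first exact: (IH j.+1 cc cc0 xi').
    rewrite lee_fin le_eqVlt; apply/orP; left; apply/eqP.
    have E : st xi' j = st xi j by apply: st_dep.
    rewrite Dval /st /= -/st E -/x -/hv.
    rewrite scalerA big_split /= scalerDr vec_rearr.
    under [X in M' * X]eq_bigr do rewrite vec_rearr2.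
    rewrite /Psi mulrDr mulr_sumr mulr_sumr; congr (_ + _).
    by rewrite mulr_sumr; apply: eq_bigr => i _; rewrite /sc !mulrA.
  - by [].
  rewrite lee_fin Dval -/x -/hv /Psi /rr.
  have H := ler_wpM2l sc0 (step x hv).
  have -> : cc * rho ^+ m.+1 = sc * rho by rewrite /sc exprSr mulrA.
  rewrite -mulrA; apply: le_trans H; rewrite le_eqVlt; apply/orP; left; apply/eqP.
  rewrite !mulrDr !mulr_sumr; congr (_ + _ + _); apply: eq_bigr => i _; ring.
move=> k.
have H := claim k 0%N 1 ler01 (fun _ _ => point).
have E : (fun xi => (1 * D (0 + k)%N xi)%:E) = (fun xi => (D k xi)%:E).
  by apply/funext => xi; rewrite add0n mul1r.
rewrite E mul1r in H.
rewrite /expect_upto; apply: (le_trans H); rewrite lee_fin.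
apply: ler_wpM2r; first exact: D_ge0.
rewrite /rho maxEle; case: ifP => _; rewrite le_max lexx ?orbT //.
Qed.
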